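(* Let $(R_x)_{x\in X}$ be a family of commutative rings indexed by a set $X$, let $R=\prod_{x\in X}R_x$, let $I$ be an ideal of the power set ring $\mathcal P(X)$, and let $I^*=\{f\in R:\operatorname{Su}(f)\in I\}$. (i) If each $R_x$ is a p.p. ring, then $R/I^*$ is a p.p. ring. (ii) If each $R_x$ is a p.f. ring, then $R/I^*$ is a p.f. ring.
   Context: $\mathcal P(X)$ is the Boolean ring of subsets of $X$ (addition symmetric difference, multiplication intersection). For $f=(f_x)\in R$, its support is $\operatorname{Su}(f)=\{x\in X: f_x\neq0\}$; $I^*$ is an ideal of $R$. A ring is p.p. (resp. p.f.) if every principal ideal is a projective (resp. flat) module. *)

(* Defs.v *)
From HB Require Import structures.
From mathcomp Require Import all_boot all_order all_algebra.
From mathcomp Require Import boolp classical_sets.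
From mathcomp Require Import generic_quotient ring_quotient.

Set Implicit Arguments.
Unset Strict Implicit.
Unset Printing Implicit Defensive.

Import GRing.Theory.
Local Open Scope ring_scope.
Local Open Scope classical_set_scope.

Definition dprod (X : Type) (R : X -> comPzRingType) := forall x : X, R x.

Section DProd.
Variables (X : Type) (R : X -> comPzRingType).
Local Notation P := (dprod R).

HB.instance Definition _ := Choice.copy P (forall x : X, R x).

Definition dp_zero : P := fun x => 0.
Definition dp_opp (f : P) : P := fun x => - f x.
Definition dp_add (f g : P) : P := fun x => f x + g x.
Definition dp_one : P := fun x => 1.
Definition dp_mul (f g : P) : P := fun x => f x * g x.

Lemma dp_addA : associative dp_add.
Proof. by move=> f g h; apply: functional_extensionality_dep => x; exact: addrA. Qed.
Lemma dp_addC : commutative dp_add.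
Proof. by move=> f g; apply: functional_extensionality_dep => x; exact: addrC. Qed.
Lemma dp_add0 : left_id dp_zero dp_add.
Proof. by move=> f; apply: functional_extensionality_dep => x; exact: add0r. Qed.
Lemma dp_addN : left_inverse dp_zero dp_opp dp_add.
Proof. by move=> f; apply: functional_extensionality_dep => x; exact: addNr. Qed.

HB.instance Definition _ := GRing.isZmodule.Build P dp_addA dp_addC dp_add0 dp_addN.

Lemma dp_mulA : associative dp_mul.
Proof. by move=> f g h; apply: functional_extensionality_dep => x; exact: mulrA. Qed.
Lemma dp_mulC : commutative dp_mul.
Proof. by move=> f g; apply: functional_extensionality_dep => x; exact: mulrC. Qed.
Lemma dp_mul1 : left_id dp_one dp_mul.
Proof. by move=> f; apply: functional_extensionality_dep => x; exact: mul1r. Qed.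
Lemma dp_mulDl : left_distributive dp_mul (@GRing.add P).
Proof. by move=> f g h; apply: functional_extensionality_dep => x; exact: mulrDl. Qed.

HB.instance Definition _ := GRing.Zmodule_isComPzRing.Build P
  dp_mulA dp_mulC dp_mul1 dp_mulDl.

Lemma dprod_addE (f g : P) x : (f + g) x = f x + g x. Proof. by []. Qed.
Lemma dprod_oppE (f : P) x : (- f) x = - f x. Proof. by []. Qed.
Lemma dprod_zeroE x : (0 : P) x = 0. Proof. by []. Qed.
Lemma dprod_mulE (f g : P) x : (f * g) x = f x * g x. Proof. by []. Qed.
Lemma dprod_oneE x : (1 : P) x = 1. Proof. by []. Qed.

Definition Su (f : P) : set X := [set x | f x != 0].

End DProd.

(* Ideals of the Boolean power-set ring P(X):                          *)
(*   addition = symmetric difference, multiplication = intersection.   *)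

Definition symdiff (X : Type) (A B : set X) : set X := (A `\` B) `|` (B `\` A).

Record PX_ideal (X : Type) := PXIdeal {
  PX_set : set (set X);
  PX_ideal0 : PX_set set0;
  PX_idealD : forall A B, PX_set A -> PX_set B -> PX_set (symdiff A B);
  PX_idealM : forall A B, PX_set B -> PX_set (A `&` B)
}.

Section IdealFacts.
Variables (X : Type) (I : PX_ideal X).

Lemma PX_ideal_sub (A B : set X) : B `<=` A -> PX_set I A -> PX_set I B.
Proof.
move=> BA IA; have -> : B = B `&` A by apply/seteqP; split=> x //=; [move=> Bx; split=> //; exact: BA|case].
exact: PX_idealM.
Qed.

Lemma PX_idealU (A B : set X) : PX_set I A -> PX_set I B -> PX_set I (A `|` B).
Proof.
move=> IA IB; have -> : A `|` B = symdiff (symdiff A B) (A `&` B).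
  apply/seteqP; split=> x /=; rewrite /symdiff /=.
    by case: (pselect (A x)); case: (pselect (B x)); intuition.
  by case: (pselect (A x)); case: (pselect (B x)); intuition.
by apply: PX_idealD; [exact: PX_idealD | exact: PX_idealM].
Qed.
End IdealFacts.

Section Istar.
Variables (X : Type) (R : X -> comPzRingType) (I : PX_ideal X).

Definition Istar : {pred dprod R} := fun f => `[< PX_set I (Su f) >].

Lemma IstarE (f : dprod R) : (f \in Istar) = `[< PX_set I (Su f) >].
Proof. by []. Qed.

Lemma Istar_zmod_closed : zmod_closed Istar.
Proof.
split.
  rewrite IstarE; apply/asboolP; have -> : Su (0 : dprod R) = set0.
    by apply/seteqP; split=> x //=; rewrite /Su /= eqxx.
  exact: PX_ideal0.
move=> u v; rewrite !IstarE => /asboolP Iu /asboolP Iv; apply/asboolP.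
apply: (PX_ideal_sub (A := Su u `|` Su v)); last exact: (PX_idealU Iu Iv).
move=> x; rewrite /Su /= => H.
case: (pselect (u x != 0)) => [|/negP]; first by left.
rewrite negbK => /eqP u0; right; apply: contra H => /eqP v0.
by rewrite dprod_addE dprod_oppE u0 v0 subrr.
Qed.

HB.instance Definition _ := GRing.isZmodClosed.Build (dprod R) Istar
  Istar_zmod_closed.

Lemma IstarMl (a u : dprod R) : u \in Istar -> a * u \in Istar.
Proof.
rewrite !IstarE => /asboolP Iu; apply/asboolP.
apply: (PX_ideal_sub (A := Su u)) => // x; rewrite /Su /= dprod_mulE.
by apply: contra => /eqP ->; rewrite mulr0.
Qed.

Local Open Scope quotient_scope.
Local Notation Q := (Quotient.quot Istar).

Definition qone : Q := lift_cst Q 1.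
Definition qmul := lift_op2 Q *%R.

Canonical pi_qone_morph := PiConst qone.

Lemma pi_qmul : {morph \pi_Q : x y / x * y >-> qmul x y}.
Proof.
move=> x y; unlock qmul; apply/eqP; rewrite piE Quotient.equivE.
rewrite -[_ * _](addrNK (x * repr (\pi_Q y))) -mulrBr.
rewrite -addrA -mulrBl rpredD //.
  by rewrite IstarMl // Quotient.idealrDE opprK reprK.
by rewrite mulrC IstarMl // Quotient.idealrDE opprK reprK.
Qed.
Canonical pi_qmul_morph := PiMorph2 pi_qmul.

Lemma qmulA : associative qmul.
Proof. by move=> x y z; rewrite -[x]reprK -[y]reprK -[z]reprK !piE mulrA. Qed.
Lemma qmulC : commutative qmul.
Proof. by move=> x y; rewrite -[x]reprK -[y]reprK !piE mulrC. Qed.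
Lemma qmul1 : left_id qone qmul.
Proof. by move=> x; rewrite -[x]reprK !piE mul1r. Qed.
Lemma qmulDl : left_distributive qmul +%R.
Proof.
move=> x y z; rewrite -[x]reprK -[y]reprK -[z]reprK.
by apply/eqP; rewrite piE /= mulrDl Quotient.equivE subrr rpred0.
Qed.

(* R / I^* as a commutative ring (possibly the zero ring when X \in I). *)
Definition quotIstar : Type := Q.
HB.instance Definition _ := GRing.Zmodule.on quotIstar.
HB.instance Definition _ := GRing.Zmodule_isComPzRing.Build quotIstar
  qmulA qmulC qmul1 qmulDl.

Definition piIstar (f : dprod R) : quotIstar := \pi_Q f.

End Istar.

(* Modules over S are MathComp's lmodType S.  The principal ideal aS   *)
(* is the S-submodule {r * a | r in S} of S; an S-linear map out of aS  *)
(* is represented by a function on S that is S-linear on aS.            *)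

Section Modules.
Variable S : comPzRingType.

Definition principal (a : S) : set S := [set x | exists r : S, x = r * a].

Definition is_lin (M N : lmodType S) (g : M -> N) : Prop :=
  forall (r : S) (x y : M), g (r *: x + y) = r *: g x + g y.

Definition lin_on (a : S) (M : lmodType S) (f : S -> M) : Prop :=
  forall (r : S) (x y : S), principal a x -> principal a y ->
    f (r * x + y) = r *: f x + f y.

Definition projective_principal (a : S) : Prop :=
  forall (M N : lmodType S) (g : N -> M) (f : S -> M),
    is_lin g -> (forall m : M, exists n : N, g n = m) -> lin_on a f ->
    exists h : S -> N, lin_on a h /\ forall y, principal a y -> g (h y) = f y.

Definition bilin_on (a : S) (N P : lmodType S) (b : N -> S -> P) : Prop :=
  (forall y, principal a y -> is_lin (fun n => b n y)) /\
  (forall n, lin_on a (b n)).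

(* The element  sum_i n_i (x) y_i  of  N (x)_S aS  is zero, expressed
   through the universal property of the tensor product: it is killed
   by every S-bilinear map out of N x aS. *)
Definition tensor_zero (a : S) (N : lmodType S) (s : seq (N * S)) : Prop :=
  forall (P : lmodType S) (b : N -> S -> P), bilin_on a b ->
    \sum_(p <- s) b p.1 p.2 = 0.

Definition flat_principal (a : S) : Prop :=
  forall (N' N : lmodType S) (iota : N' -> N),
    is_lin iota -> injective iota ->
    forall s : seq (N' * S), (forall p, p \in s -> principal a p.2) ->
      tensor_zero a [seq (iota p.1, p.2) | p <- s] -> tensor_zero a s.

Definition pp_ring : Prop := forall a : S, projective_principal a.
Definition pf_ring : Prop := forall a : S, flat_principal a.

End Modules.

(* Main.v *)
Require Import Defs.
From HB Require Import structures.
From mathcomp Require Import all_boot all_algebra.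
From mathcomp Require Import boolp classical_sets.
From mathcomp Require Import generic_quotient ring_quotient.
Set Implicit Arguments.
Unset Strict Implicit.
Unset Printing Implicit Defensive.
Import GRing.Theory.
Local Open Scope ring_scope.

Section ModQuot.
Variables (S : comPzRingType) (M : lmodType S) (K : {pred M}).
Hypothesis Kzc : zmod_closed K.
Hypothesis KZ : forall r x, x \in K -> r *: x \in K.
Definition Kp : {pred M} := K.
HB.instance Definition _ := GRing.isZmodClosed.Build M Kp Kzc.
Local Open Scope quotient_scope.
Local Notation Q := (Quotient.quot Kp).

Definition mqscale (r : S) : Q -> Q := lift_op1 Q ( *:%R r).
Lemma pi_mqscale r : {morph \pi_Q : x / r *: x >-> mqscale r x}.
Proof.
move=> x; unlock mqscale; apply/eqP; rewrite piE Quotient.equivE.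
rewrite -scalerBr KZ //.
have : (repr (\pi_Q x) - x) \in Kp by rewrite Quotient.idealrBE reprK.
by rewrite -opprB rpredN.
Qed.
Canonical pi_mqscale_morph r := PiMorph1 (pi_mqscale r).

Lemma mqA a b v : mqscale a (mqscale b v) = mqscale (a * b) v.
Proof. by rewrite -[v]reprK !piE scalerA. Qed.
Lemma mq1 : left_id 1 mqscale.
Proof. by move=> v; rewrite -[v]reprK !piE scale1r. Qed.
Lemma mqDr : right_distributive mqscale +%R.
Proof. by move=> a u v; rewrite -[u]reprK -[v]reprK !piE scalerDr. Qed.
Lemma mqDl v : {morph mqscale^~ v : a b / a + b}.
Proof. by move=> a b; rewrite -[v]reprK !piE scalerDl. Qed.

Definition modquot (kz : forall r x, x \in K -> r *: x \in K) : Type := Q.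
HB.instance Definition _ := GRing.Zmodule.on (modquot KZ).
HB.instance Definition _ := GRing.Zmodule_isLmodule.Build S (modquot KZ) mqA mq1 mqDr mqDl.

Definition mqpi (x : M) : modquot KZ := \pi_Q x.
Lemma mqpiD x y : mqpi (x + y) = mqpi x + mqpi y.
Proof. by rewrite /mqpi raddfD. Qed.
Lemma mqpiZ r x : mqpi (r *: x) = r *: mqpi x.
Proof. exact: pi_mqscale. Qed.
Lemma mqpi0 : mqpi 0 = 0.
Proof. by rewrite /mqpi raddf0. Qed.
Lemma mqpi_eq0 x : (mqpi x = 0) <-> x \in K.
Proof.
rewrite /mqpi -(raddf0 \pi_Q); split.
  by move=> H; have := Quotient.idealrBE Kp x 0; rewrite H eqxx subr0.
by move=> H; apply/eqP; rewrite -Quotient.idealrBE subr0.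
Qed.
Lemma mqpiB x y : mqpi (x - y) = mqpi x - mqpi y.
Proof. by rewrite /mqpi raddfB. Qed.
Lemma mqpi_eq x y : (mqpi x = mqpi y) <-> x - y \in K.
Proof.
rewrite -mqpi_eq0 mqpiB; split; first by move=> ->; rewrite subrr.
by move/eqP; rewrite subr_eq0 => /eqP.
Qed.
Lemma mqpi_surj (q : modquot KZ) : exists x, mqpi x = q.
Proof. by exists (repr q); rewrite /mqpi reprK. Qed.
End ModQuot.
Arguments mqpiD {S M K Kzc KZ} x y.
Arguments mqpiZ {S M K Kzc KZ} r x.
Arguments mqpiB {S M K Kzc KZ} x y.
Arguments mqpi0 {S M K Kzc KZ}.
Arguments mqpi_eq0 {S M K Kzc KZ} x.
Arguments mqpi_eq {S M K Kzc KZ} x y.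
Arguments mqpi_surj {S M K Kzc KZ} q.
Section Basics.
Variable S : comPzRingType.
Implicit Types a r : S.


Lemma pr_a a : principal a a. Proof. by exists 1; rewrite mul1r. Qed.
Lemma pr_0 a : principal a 0. Proof. by exists 0; rewrite mul0r. Qed.
Lemma pr_M a r (x : S) : principal a x -> principal a (r * x).
Proof. by case=> u ->; exists (r * u); rewrite mulrA. Qed.
Lemma pr_D a (x y : S) : principal a x -> principal a y -> principal a (x + y).
Proof. by case=> u -> [v ->]; exists (u + v); rewrite mulrDl. Qed.

Definition pu a (y : S) : S :=
  match pselect (principal a y) with
  | left H => projT1 (cid H)
  | right _ => 0
  end.
Lemma puP a (y : S) : principal a y -> y = pu a y * a.
Proof.
rewrite /pu; case: pselect => // H _; exact: (projT2 (cid H)).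
Qed.
Lemma pu_diff a (y u : S) : principal a y -> y = u * a -> (pu a y - u) * a = 0.
Proof. by move=> Hy Hu; rewrite mulrBl -puP // -Hu subrr. Qed.

Section Lin.
Variables (M : lmodType S) (a : S) (f : S -> M).
Hypothesis fl : lin_on a f.
Lemma lin_on0 : f 0 = 0.
Proof.
have := fl 1 (pr_0 a) (pr_0 a); rewrite mulr0 addr0 scale1r => /eqP.
by rewrite -subr_eq subrr eq_sym => /eqP.
Qed.
Lemma lin_onM r (x : S) : principal a x -> f (r * x) = r *: f x.
Proof. by move=> Hx; have := fl r Hx (pr_0 a); rewrite !addr0 lin_on0 addr0. Qed.
Lemma lin_onD (x y : S) : principal a x -> principal a y -> f (x + y) = f x + f y.
Proof. by move=> Hx Hy; have := fl 1 Hx Hy; rewrite mul1r scale1r. Qed.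
End Lin.

Section IsLin.
Variables (M N : lmodType S) (g : M -> N).
Hypothesis gl : is_lin g.
Lemma is_lin0 : g 0 = 0.
Proof.
have := gl 1 0 0; rewrite scaler0 addr0 scale1r => /eqP.
by rewrite -subr_eq subrr eq_sym => /eqP.
Qed.
Lemma is_linZ r x : g (r *: x) = r *: g x.
Proof. by have := gl r x 0; rewrite !addr0 is_lin0 addr0. Qed.
Lemma is_linD x y : g (x + y) = g x + g y.
Proof. by have := gl 1 x y; rewrite !scale1r. Qed.
Lemma is_linB x y : g (x - y) = g x - g y.
Proof. by have := gl (-1) y x; rewrite !scaleN1r addrC => ->; rewrite addrC. Qed.
End IsLin.

Definition ann a : {pred S^o} := [pred t : S | t * a == 0].
Lemma ann_zc a : zmod_closed (ann a).
Proof.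
split; first by rewrite inE mul0r.
by move=> u v; rewrite !inE mulrBl => /eqP -> /eqP ->; rewrite subrr.
Qed.
Lemma ann_Z a r (x : S^o) : x \in ann a -> r *: x \in ann a.
Proof. by rewrite !inE => /eqP H; apply/eqP; rewrite -mulrA (H : x * a = 0) mulr0. Qed.

Lemma pp_char_to a : projective_principal a ->
  exists e, e * a = 0 /\ forall r, r * a = 0 -> r = r * e.
Proof.
move=> Hp.
pose Mq := modquot (ann_zc a) (@ann_Z a).
pose g : S^o -> Mq := mqpi (ann_zc a) (@ann_Z a).
have gl : is_lin g by move=> r x y; rewrite /g mqpiD mqpiZ.
have gs : forall m : Mq, exists n, g n = m by move=> m; exact: mqpi_surj.
pose f := fun y : S => g (pu a y).
have fl : lin_on a f.
  move=> r x y Hx Hy; rewrite /f -mqpiZ -mqpiD; apply/eqP; rewrite -subr_eq0 -/g.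
  rewrite -is_linB //; apply/eqP/mqpi_eq0; rewrite inE; apply/eqP.
  apply: pu_diff; first by apply: pr_D => //; exact: pr_M.
  by rewrite mulrDl -mulrA -!puP.
have [h [hl hg]] := Hp _ _ g f gl gs fl.
have := hg a (pr_a a); rewrite /f; move/eqP; rewrite -subr_eq0 -is_linB //.
move/eqP/mqpi_eq0; rewrite inE mulrBl -(puP (pr_a a)) => /eqP/subr0_eq ha.
exists (1 - h a); split; first by rewrite mulrBl mul1r ha subrr.
move=> r Hr; have := lin_onM hl r (pr_a a); rewrite Hr (lin_on0 hl).
by move=> H; rewrite mulrBr mulr1 -[r * h a]/(r *: (h a : S^o)) -H subr0.
Qed.

Lemma pp_char_from a e : e * a = 0 -> (forall r, r * a = 0 -> r = r * e) ->
  projective_principal a.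
Proof.
move=> ea He M N g f gl gs fl.
have [n0 hn0] := gs (f a).
have key : forall y u, principal a y -> y = u * a -> pu a y * (1 - e) = u * (1 - e).
  move=> y u Hy Hu; apply/eqP; rewrite -subr_eq0 -mulrBl; apply/eqP.
  have H := He _ (pu_diff Hy Hu).
  by rewrite mulrBr mulr1 -H subrr.
exists (fun y => (pu a y * (1 - e)) *: n0); split.
  move=> r x y Hx Hy.
  rewrite (key (r * x + y) (r * pu a x + pu a y)); last first.
    by rewrite mulrDl -mulrA -!puP.
    by apply: pr_D => //; exact: pr_M.
  by rewrite mulrDl scalerDl scalerA mulrA.
move=> y Hy; rewrite is_linZ // hn0 -(lin_onM fl _ (pr_a a)).
by rewrite -mulrA mulrBl mul1r ea subr0 -puP.
Qed.

Lemma pf_char_to a : flat_principal a ->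
  forall r, r * a = 0 -> exists s, s * a = 0 /\ r = r * s.
Proof.
move=> Hf r ra.
pose N' := modquot (ann_zc r) (@ann_Z r).
pose pi1 : S^o -> N' := mqpi (ann_zc r) (@ann_Z r).
have pi1l : is_lin pi1 by move=> c x y; rewrite /pi1 mqpiD mqpiZ.
pose pk := fun q : N' => projT1 (cid (@mqpi_surj _ _ _ (ann_zc r) (@ann_Z r) q)).
have pkK : forall q, pi1 (pk q) = q := fun q => projT2 (cid (@mqpi_surj _ _ _ (ann_zc r) (@ann_Z r) q)).
have pk_diff : forall t q, pi1 t = q -> (pk q - t) * r = 0.
  move=> t q Ht; have : pi1 (pk q) = pi1 t by rewrite pkK Ht.
  by move/(@mqpi_eq _ _ _ (ann_zc r) (@ann_Z r) (pk q) t); rewrite inE => /eqP.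
pose iota := fun q : N' => (pk q * r : S^o).
have il : is_lin iota.
  move=> c q1 q2; rewrite /iota.
  have := pk_diff (c * pk q1 + pk q2) (c *: q1 + q2).
  rewrite -[c * pk q1]/(c *: (pk q1 : S^o)) (pi1l c) !pkK => /(_ erefl).
  move/eqP; rewrite mulrBl subr_eq0 => /eqP ->.
  by rewrite mulrDl -mulrA.
have ii : injective iota.
  move=> q1 q2; rewrite /iota => /eqP; rewrite -subr_eq0 -mulrBl => /eqP H.
  by rewrite -(pkK q1) -(pkK q2); apply/(@mqpi_eq _ _ _ (ann_zc r) (@ann_Z r)); rewrite inE H.
have tz := Hf N' S^o iota il ii [:: (pi1 1, a)].
have {tz} tz : tensor_zero a [:: (pi1 1, a)].
  apply: tz; first by move=> p; rewrite inE => /eqP -> /=; exact: pr_a.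
  move=> P b [bl1 bl2] /=; rewrite big_cons big_nil addr0 /=.
  have -> : iota (pi1 1) = r *: (1 : S^o).
    rewrite /iota; have := pk_diff 1 (pi1 1) erefl.
    by move/eqP; rewrite mulrBl subr_eq0 mul1r => /eqP ->; rewrite -[r *: _]/(r * 1) mulr1.
  rewrite (is_linZ (bl1 a (pr_a a))) -(lin_onM (bl2 1) _ (pr_a a)) ra.
  exact: (lin_on0 (bl2 1)).
pose Jp : {pred S^o} := [pred t : S | `[< exists p q, t = p + q /\ p * r = 0 /\ q * a = 0 >]].
have Jin_p : forall p, p * r = 0 -> p \in Jp.
  by move=> p Hp; rewrite /Jp inE; exists p, 0; rewrite addr0 mul0r.
have Jin_q : forall q, q * a = 0 -> q \in Jp.
  by move=> q Hq; rewrite /Jp inE; exists 0, q; rewrite add0r mul0r.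
have Jzc : zmod_closed Jp.
  split; first by apply: Jin_p; rewrite mul0r.
  move=> u v; rewrite /Jp !inE => -[p1 [q1 [E1 [h1 h2]]]] [p2 [q2 [E2 [h3 h4]]]].
  exists (p1 - p2), (q1 - q2); split; first by rewrite E1 E2 opprD addrACA.
  by rewrite !mulrBl h1 h2 h3 h4 subrr.
have JZ : forall c (x : S^o), x \in Jp -> c *: x \in Jp.
  move=> c x; rewrite /Jp !inE => -[p [q [E [h1 h2]]]].
  exists (c * p), (c * q); split; first by rewrite E -mulrDr.
  by rewrite -!mulrA h1 h2 !mulr0.
pose pj := mqpi Jzc JZ.
have pj_eq := @mqpi_eq _ _ _ Jzc JZ.
have pj_eq0 := @mqpi_eq0 _ _ _ Jzc JZ.
pose b := fun (q : N') (y : S) => pj (pk q * pu a y).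
have bl : bilin_on a b.
  split.
    move=> y Hy c q1 q2; rewrite /b -mqpiZ -mqpiD; apply/pj_eq.
    rewrite -[c *: (_ : S^o)]/(c * (pk q1 * pu a y)) mulrA -mulrDl -mulrBl.
    apply: Jin_p; rewrite mulrAC.
    have := pk_diff (c * pk q1 + pk q2) (c *: q1 + q2).
    rewrite -[c * pk q1]/(c *: (pk q1 : S^o)) (pi1l c) !pkK => /(_ erefl) ->.
    by rewrite mul0r.
  move=> q c x y Hx Hy; rewrite /b -mqpiZ -mqpiD; apply/pj_eq.
  rewrite -[c *: (_ : S^o)]/(c * (pk q * pu a x)) mulrCA -mulrDr -mulrBr.
  apply: Jin_q; rewrite -mulrA pu_diff ?mulr0 //.
    by apply: pr_D => //; exact: pr_M.
  by rewrite mulrDl -mulrA -!puP.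
have := tz _ b bl; rewrite big_cons big_nil addr0 /= /b.
move/pj_eq0 => Hx.
have Hx1 : pk (pi1 1) * pu a a - 1 \in Jp.
  have -> : pk (pi1 1) * pu a a - 1 = (pk (pi1 1) - 1) * pu a a + (pu a a - 1).
    by rewrite mulrBl mul1r addrA subrK.
  rewrite /Jp inE; exists ((pk (pi1 1) - 1) * pu a a), (pu a a - 1); split => //.
  split; first by rewrite mulrAC pk_diff // mul0r.
  by apply: pu_diff (pr_a a) _; rewrite mul1r.
have := Jzc.2 _ _ Hx Hx1; rewrite opprB addrC subrK /Jp inE => -[p [q [H1 [h1 h2]]]].
exists q; split => //.
by rewrite -{1}(mulr1 r) H1 mulrDr mulrC h1 add0r.
Qed.

Lemma is_lin_sum (M N : lmodType S) (g : M -> N) (T : Type) (F : T -> M) (s : seq T) :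
  is_lin g -> g (\sum_(p <- s) F p) = \sum_(p <- s) g (F p).
Proof.
move=> gl; elim: s => [|p s IH]; first by rewrite !big_nil (is_lin0 gl).
by rewrite !big_cons (is_linD gl) IH.
Qed.

Lemma sum_red (N P : lmodType S) a (b : N -> S -> P) : bilin_on a b ->
  forall s : seq (N * S), (forall p, p \in s -> principal a p.2) ->
  \sum_(p <- s) b p.1 p.2 = b (\sum_(p <- s) pu a p.2 *: p.1) a.
Proof.
move=> [bl1 bl2]; elim=> [|p s IH] Hs.
  by rewrite !big_nil (is_lin0 (bl1 a (pr_a a))).
rewrite !big_cons IH; last by move=> q Hq; apply: Hs; rewrite inE Hq orbT.
have Hp : principal a p.2 by apply: Hs; rewrite inE eqxx.
rewrite (is_linD (bl1 a (pr_a a))) (is_linZ (bl1 a (pr_a a))).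
by rewrite {1}(puP Hp) (lin_onM (bl2 p.1) _ (pr_a a)).
Qed.

Lemma fix_comb (N : lmodType S) (s1 s2 : S) (u : N) :
  u = s1 *: u -> (s1 + s2 - s1 * s2) *: u = u.
Proof.
move=> Hu; rewrite [s1 * s2]mulrC scalerBl scalerDl -scalerA -Hu.
by rewrite addrK.
Qed.

Lemma pf_char_from a : (forall r, r * a = 0 -> exists s, s * a = 0 /\ r = r * s) ->
  flat_principal a.
Proof.
move=> Hpure N' N iota il ii s Hs Htz P b bl.
rewrite (sum_red bl Hs); set m' := \sum_(p <- s) _.
pose Kp : {pred N} := [pred n : N | `[< exists s0, s0 * a = 0 /\ n = s0 *: n >]].
have Kzc : zmod_closed Kp.
  split; first by rewrite /Kp inE; exists 0; rewrite mul0r scaler0.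
  move=> u v; rewrite /Kp !inE => -[s1 [h1 E1]] [s2 [h2 E2]].
  exists (s1 + s2 - s1 * s2); split.
    by rewrite mulrBl !mulrDl h1 h2 -mulrA h2 mulr0 !addr0 subrr.
  rewrite scalerBr fix_comb //.
  by rewrite [s1 + s2]addrC [s1 * s2]mulrC fix_comb.
have KZ : forall c (x : N), x \in Kp -> c *: x \in Kp.
  move=> c x; rewrite /Kp !inE => -[s0 [h E]]; exists s0; split => //.
  by rewrite scalerA mulrC -scalerA -E.
have annK : forall d n, d * a = 0 -> d *: n \in Kp.
  move=> d n Hd; have [s0 [h E]] := Hpure d Hd.
  rewrite /Kp inE; exists s0; split => //.
  by rewrite scalerA mulrC -E.
pose pk := mqpi Kzc KZ.
have pk_eq := @mqpi_eq _ _ _ Kzc KZ.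
have pk_eq0 := @mqpi_eq0 _ _ _ Kzc KZ.
pose c := fun (n : N) (y : S) => pk (pu a y *: n).
have cl : bilin_on a c.
  split.
    move=> y Hy r x z; rewrite /c -mqpiZ -mqpiD.
    by rewrite scalerDr !scalerA mulrC.
  move=> n r x y Hx Hy; rewrite /c -mqpiZ -mqpiD; apply/pk_eq.
  rewrite scalerA -scalerDl -scalerBl; apply: annK.
  apply: pu_diff; first by apply: pr_D => //; exact: pr_M.
  by rewrite mulrDl -mulrA -!puP.
have := Htz _ c cl.
rewrite (sum_red cl); last first.
  move=> p /mapP [q Hq ->] /=; exact: Hs.
rewrite big_map /=.
have -> : \sum_(p <- s) pu a p.2 *: iota p.1 = iota m'.
  rewrite /m' (is_lin_sum _ _ il); apply: eq_bigr => p _.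
  by rewrite (is_linZ il).
move/pk_eq0 => Hx.
have Hm : iota m' \in Kp.
  have -> : iota m' = pu a a *: iota m' - (pu a a - 1) *: iota m'.
    by rewrite scalerBl scale1r opprB addrC subrK.
  apply: Kzc.2 => //; apply: annK.
  by apply: pu_diff (pr_a a) _; rewrite mul1r.
move: Hm; rewrite /Kp inE => -[s0 [h E]].
have E' : m' = s0 *: m' by apply: ii; rewrite (is_linZ il).
rewrite E' (is_linZ (bl.1 a (pr_a a))) -(lin_onM (bl.2 m') _ (pr_a a)) h.
exact: (lin_on0 (bl.2 m')).
Qed.
End Basics.

Section Transfer.
Variables (X : Type) (R : X -> comPzRingType) (I : PX_ideal X).
Local Notation Q := (quotIstar R I).

Lemma piI_surj (A : Q) : exists f, piIstar I f = A.
Proof. by exists (repr A); rewrite /piIstar reprK. Qed.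

Lemma piI_mul (f g : dprod R) : piIstar I (f * g) = piIstar I f * piIstar I g.
Proof. exact: pi_qmul. Qed.

Lemma piI_eq (f g : dprod R) : piIstar I f = piIstar I g <-> PX_set I (Su (f - g)).
Proof.
have := Quotient.idealrBE (Istar I) f g; rewrite IstarE => H.
split.
  by move=> E; apply/asboolP; rewrite H; apply/eqP; exact: E.
by move/asboolP; rewrite H => /eqP.
Qed.

Lemma piI0 : piIstar I (0 : dprod R) = 0.
Proof. by rewrite /piIstar raddf0. Qed.

Lemma piI_eq0 (f : dprod R) : piIstar I f = 0 <-> PX_set I (Su f).
Proof. by rewrite -piI0 piI_eq subr0. Qed.

Lemma Su_empty (f : dprod R) : (forall x, f x = 0) -> PX_set I (Su f).
Proof.
move=> H; apply: (PX_ideal_sub (A := set0)); last exact: PX_ideal0.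
by move=> x; rewrite /Su /= H eqxx.
Qed.

Lemma Su_sub (f g : dprod R) : PX_set I (Su g) -> (forall x, g x = 0 -> f x = 0) ->
  PX_set I (Su f).
Proof.
move=> Hg H; apply: (PX_ideal_sub _ Hg) => x; rewrite /Su /=.
by apply: contra => /eqP /H ->.
Qed.

Lemma pp_transfer : (forall x : X, pp_ring (R x)) -> pp_ring Q.
Proof.
move=> Hx A; have [a <-] := piI_surj A.
pose e : dprod R := fun x => projT1 (cid (pp_char_to (Hx x (a x)))).
have He : forall x, e x * a x = 0 /\ forall r, r * a x = 0 -> r = r * e x.
  by move=> x; exact: (projT2 (cid (pp_char_to (Hx x (a x))))).
apply: (@pp_char_from _ _ (piIstar I e)).
  by rewrite -piI_mul; apply/piI_eq0; apply: Su_empty => x; exact: (He x).1.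
move=> Rr; have [r <-] := piI_surj Rr; rewrite -piI_mul => /piI_eq0 H.
rewrite -piI_mul; apply/piI_eq; apply: (Su_sub H) => x Hx0.
by rewrite dprod_addE dprod_oppE dprod_mulE -(He x).2 ?subrr.
Qed.

Lemma pf_transfer : (forall x : X, pf_ring (R x)) -> pf_ring Q.
Proof.
move=> Hx A; have [a <-] := piI_surj A.
apply: pf_char_from => Rr; have [r <-] := piI_surj Rr; rewrite -piI_mul => /piI_eq0 H.
pose s : dprod R := fun x => match pselect (r x * a x = 0) with
  | left Hr => projT1 (cid (pf_char_to (Hx x (a x)) Hr))
  | right _ => 0 end.
have Hs : forall x, s x * a x = 0 /\ (r x * a x = 0 -> r x = r x * s x).
  move=> x; rewrite /s; case: pselect => [Hr|Hr].
    have := projT2 (cid (pf_char_to (Hx x (a x)) Hr)); case=> h1 h2.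
    by split => // _.
  by split => //; rewrite mul0r.
exists (piIstar I s); split.
  by rewrite -piI_mul; apply/piI_eq0; apply: Su_empty => x; exact: (Hs x).1.
rewrite -piI_mul; apply/piI_eq; apply: (Su_sub H) => x Hx0.
by rewrite dprod_addE dprod_oppE dprod_mulE -(Hs x).2 ?subrr.
Qed.
End Transfer.

Theorem proposition6p3 (X : Type) (R : X -> comPzRingType) (I : PX_ideal X) :
  ((forall x : X, pp_ring (R x)) -> pp_ring (quotIstar R I)) /\
  ((forall x : X, pf_ring (R x)) -> pf_ring (quotIstar R I)).
Proof. split; [exact: pp_transfer | exact: pf_transfer]. Qed.
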